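(* Let $0\to(M,\alpha_M)\xrightarrow{t}(G,\alpha_G)\xrightarrow{p}(Q,\mathrm{Id}_Q)\to0$ be a split short exact sequence of $\alpha$-perfect Hom-Leibniz algebras with splitting homomorphism $s$, $p\circ s=\mathrm{Id}_Q$, and suppose the induced Hom-action of $Q$ on $M$, $q\cdot m=t^{-1}[s(q),t(m)]$, $m\cdot q=t^{-1}[t(m),s(q)]$, is symmetric: $q\cdot m+m\cdot q=0$. Let $\tau=\mathfrak{uce}_\alpha(t):\mathfrak{uce}_\alpha(M)\to\mathfrak{uce}_\alpha(G)$, $\sigma=\mathfrak{uce}_\alpha(s):\mathfrak{uce}(Q)\to\mathfrak{uce}_\alpha(G)$, $\sigma\{q_1,q_2\}=\{s(q_1),s(q_2)\}$, and $\pi=\mathfrak{uce}_\alpha(p)$. Then: 1. $\tau(\mathfrak{uce}_\alpha(M))=\mathrm{Ker}\,\pi$ is a two-sided Hom-ideal of $\mathfrak{uce}_\alpha(G)$, $\sigma(\mathfrak{uce}(Q))$ is a Hom-subalgebra on which $\overline{\alpha_G}$ is the identity, $\mathfrak{uce}_\alpha(G)=\tau(\mathfrak{uce}_\alpha(M))\oplus\sigma(\mathfrak{uce}(Q))$ as vector spaces, and $\mathfrak{uce}_\alpha(G)\cong\tau(\mathfrak{uce}_\alpha(M))\rtimes\sigma(\mathfrak{uce}(Q))$ with the Hom-action given by the bracket of $\mathfrak{uce}_\alpha(G)$. 2. $\sigma$ is an isomorphism of $(\mathfrak{uce}(Q),\mathrm{Id})$ onto $\sigma(\mathfrak{uce}(Q))$.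 3. $\mathrm{Ker}(U^G_\alpha)=\tau(\mathrm{Ker}\,U^M_\alpha)\oplus\sigma(HL_2(Q))$. 4. The formulas $\{q_1,q_2\}\cdot\{\alpha_M(m_1),\alpha_M(m_2)\}=\{[q_1,q_2]\cdot\alpha_M(m_1),\alpha_M^2(m_2)\}-\{[q_1,q_2]\cdot\alpha_M(m_2),\alpha_M^2(m_1)\}$ and $\{\alpha_M(m_1),\alpha_M(m_2)\}\cdot\{q_1,q_2\}=\{\alpha_M(m_1)\cdot[q_1,q_2],\alpha_M^2(m_2)\}-\{\alpha_M^2(m_1),[q_1,q_2]\cdot\alpha_M(m_2)\}$ define a Hom-action of $(\mathfrak{uce}(Q),\mathrm{Id})$ on $(\mathfrak{uce}_\alpha(M),\overline{\alpha_M})$; the map $\tau\rtimes\sigma:\mathfrak{uce}_\alpha(M)\rtimes\mathfrak{uce}(Q)\to\mathfrak{uce}_\alpha(G)$, $(x,y)\mapsto\tau(x)+\sigma(y)$, is a surjective homomorphism; and $\Phi:=U^G_\alpha\circ(\tau\rtimes\sigma)$, i.e. $\Phi(\{\alpha_M(m_1),\alpha_M(m_2)\},\{q_1,q_2\})=t[\alpha_M(m_1),\alpha_M(m_2)]+s[q_1,q_2]$, is a surjective homomorphism onto $(G,\alpha_G)$ with $\mathrm{Ker}\,\Phi=\mathrm{Ker}(U^M_\alpha)\oplus HL_2(Q)$. 5. $\mathrm{Ker}(\tau\rtimes\sigma)=\big(\mathfrak{uce}(Q)\cdot\mathrm{Ker}(U^M_\alpha)+\mathrm{Ker}(U^M_\alpha)\cdot\mathfrak{uce}(Q)\big)\oplus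 0$, where the products denote the spans of the actions above.
   Context: Hom-Leibniz algebras are multiplicative: $(L,\alpha_L)$ is a $\mathbb{K}$-vector space with bilinear bracket and linear $\alpha_L$ such that $[\alpha_L(x),[y,z]]=[[x,y],\alpha_L(z)]-[[x,z],\alpha_L(y)]$ and $\alpha_L[x,y]=[\alpha_L(x),\alpha_L(y)]$; homomorphisms preserve brackets and commute with structure maps. $(L,\alpha_L)$ is $\alpha$-perfect if $L=[\alpha_L(L),\alpha_L(L)]$ (for $(Q,\mathrm{Id}_Q)$ this means $Q=[Q,Q]$). A Hom-action of $(L,\alpha_L)$ on $(M,\alpha_M)$ is a pair of bilinear maps $x\otimes m\mapsto x\cdot m$, $m\otimes x\mapsto m\cdot x$ with, for all $x,y\in L$, $m,m'\in M$: $\alpha_M(m)\cdot[x,y]=(m\cdot x)\cdot\alpha_L(y)-(m\cdot y)\cdot\alpha_L(x)$; $\alpha_L(x)\cdot(m\cdot y)=(x\cdot m)\cdot\alpha_L(y)-[x,y]\cdot\alpha_M(m)$; $\alpha_L(x)\cdot(y\cdot m)=[x,y]\cdot\alpha_M(m)-(x\cdot m)\cdot\alpha_L(y)$; $\alpha_L(x)\cdot[m,m']=[x\cdot m,\alpha_M(m')]-[x\cdot m',\alpha_M(m)]$; $[\alpha_M(m),m'\cdot x]=[m,m']\cdot\alpha_L(x)-[m\cdot x,\alpha_M(m')]$; $[\alpha_M(m),x\cdot m']=[m\cdot x,\alpha_M(m')]-[m,m']\cdot\alpha_L(x)$; $\alpha_M(x\cdot m)=\alpha_L(x)\cdot\alpha_M(m)$;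 $\alpha_M(m\cdot x)=\alpha_M(m)\cdot\alpha_L(x)$. The semi-direct product $M\rtimes L$ is $M\oplus L$ with $\widetilde\alpha(m,l)=(\alpha_M(m),\alpha_L(l))$ and $[(m_1,l_1),(m_2,l_2)]=([m_1,m_2]+\alpha_L(l_1)\cdot m_2+m_1\cdot\alpha_L(l_2),[l_1,l_2])$. For $\alpha$-perfect $(L,\alpha_L)$: $I_L\subseteq\alpha_L(L)\otimes\alpha_L(L)$ is spanned by $-[x_1,x_2]\otimes\alpha_L(x_3)+[x_1,x_3]\otimes\alpha_L(x_2)+\alpha_L(x_1)\otimes[x_2,x_3]$; $\mathfrak{uce}_\alpha(L)=(\alpha_L(L)\otimes\alpha_L(L))/I_L$ with classes $\{\alpha_L(x_1),\alpha_L(x_2)\}$, bracket $[\{a,b\},\{c,e\}]=\{[a,b],[c,e]\}$, endomorphism $\overline{\alpha_L}\{\alpha_L(x_1),\alpha_L(x_2)\}=\{\alpha_L^2(x_1),\alpha_L^2(x_2)\}$, and $U^L_\alpha\{a,b\}=[a,b]$, the universal $\alpha$-central extension of $L$. For $Q$ with $\mathrm{Id}_Q$ this gives $\mathfrak{uce}(Q)=(Q\otimes Q)/I_Q$ with identity endomorphism, $u_Q\{q_1,q_2\}=[q_1,q_2]$, and $HL_2(Q)=\mathrm{Ker}\,u_Q$. For a homomorphism $g$, $\mathfrak{uce}_\alpha(g)\{\alpha(x_1),\alpha(x_2)\}=\{\alpha(g(x_1)),\alpha(g(x_2))\}$. *)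

(* Defs.v *)
(* Hom-Leibniz algebras over a field K, modelled on
   K-vector spaces (lmodType K) with a bracket and a structure map given as
   plain functions plus the axioms of the paper. *)
From HB Require Import structures.
From mathcomp Require Import all_boot all_order all_algebra.
Set Implicit Arguments. Unset Strict Implicit. Unset Printing Implicit Defensive.
Import GRing.Theory.
Local Open Scope ring_scope.

Section HomLeibniz.
Variable K : fieldType.

Definition is_lin (V W : lmodType K) (f : V -> W) : Prop :=
  forall (a : K) x y, f (a *: x + y) = a *: f x + f y.

Definition bilin (V W X : lmodType K) (f : V -> W -> X) : Prop :=
  (forall y, is_lin (fun x => f x y)) /\ (forall x, is_lin (f x)).

Inductive in_span (V : lmodType K) (P : V -> Prop) : V -> Prop :=
| span0 : in_span P 0
| spanS : forall (a : K) x v, P x -> in_span P v -> in_span P (a *: x + v).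

Definition hom_leibniz (L : lmodType K) (br : L -> L -> L) (al : L -> L) : Prop :=
  [/\ bilin br, is_lin al,
      (forall x y z, br (al x) (br y z) = br (br x y) (al z) - br (br x z) (al y))
    & (forall x y, al (br x y) = br (al x) (al y))].

Definition alpha_perfect (L : lmodType K) (br : L -> L -> L) (al : L -> L) : Prop :=
  forall x, in_span (fun v => exists a b, v = br (al a) (al b)) x.

Definition hl_hom (L1 L2 : lmodType K) (br1 : L1 -> L1 -> L1) (al1 : L1 -> L1)
  (br2 : L2 -> L2 -> L2) (al2 : L2 -> L2) (f : L1 -> L2) : Prop :=
  [/\ is_lin f, (forall x y, f (br1 x y) = br2 (f x) (f y))
    & (forall x, f (al1 x) = al2 (f x))].

(* Hom-action of (L,alL) on (M,alM), relativised to subsets PL of L and PM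
   of M (use predicates that are always True for the ordinary notion).
   la x m = x . m ,  ra m x = m . x *)
Definition hom_action_on (L M : lmodType K) (PL : L -> Prop) (PM : M -> Prop)
  (brL : L -> L -> L) (alL : L -> L) (brM : M -> M -> M) (alM : M -> M)
  (la : L -> M -> M) (ra : M -> L -> M) : Prop :=
  [/\ (forall x m, PL x -> PM m -> PM (la x m) /\ PM (ra m x)),
      (forall (a : K) x y m, PL x -> PL y -> PM m ->
          la (a *: x + y) m = a *: la x m + la y m /\
          ra m (a *: x + y) = a *: ra m x + ra m y),
      (forall (a : K) x m m', PL x -> PM m -> PM m' ->
          la x (a *: m + m') = a *: la x m + la x m' /\
          ra (a *: m + m') x = a *: ra m x + ra m' x)
    & (forall x y m m', PL x -> PL y -> PM m -> PM m' ->
       (ra (alM m) (brL x y) = ra (ra m x) (alL y) - ra (ra m y) (alL x)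
    /\ la (alL x) (ra m y) = ra (la x m) (alL y) - la (brL x y) (alM m)
    /\ la (alL x) (la y m) = la (brL x y) (alM m) - ra (la x m) (alL y)
    /\ la (alL x) (brM m m') = brM (la x m) (alM m') - brM (la x m') (alM m)
    /\ brM (alM m) (ra m' x) = ra (brM m m') (alL x) - brM (ra m x) (alM m')
    /\ brM (alM m) (la x m') = brM (ra m x) (alM m') - ra (brM m m') (alL x)
    /\ alM (la x m) = la (alL x) (alM m)
    /\ alM (ra m x) = ra (alM m) (alL x)))].

Definition hom_action (L M : lmodType K)
  (brL : L -> L -> L) (alL : L -> L) (brM : M -> M -> M) (alM : M -> M)
  (la : L -> M -> M) (ra : M -> L -> M) : Prop :=
  hom_action_on (fun _ => True) (fun _ => True) brL alL brM alM la ra.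

Definition sd_br (L M : lmodType K) (brM : M -> M -> M) (brL : L -> L -> L)
  (alL : L -> L) (la : L -> M -> M) (ra : M -> L -> M) (p1 p2 : M * L) : M * L :=
  (brM p1.1 p2.1 + la (alL p1.2) p2.1 + ra p1.1 (alL p2.2), brL p1.2 p2.2).

Definition sd_al (L M : lmodType K) (alM : M -> M) (alL : L -> L) (p : M * L) : M * L :=
  (alM p.1, alL p.2).

(* The I_L-relation for a bilinear map f on alpha(L) x alpha(L) = L x L
   (for alpha-perfect L, alpha is onto, so alpha(L) = L). *)
Definition kills_IL (L W : lmodType K) (br : L -> L -> L) (al : L -> L)
  (f : L -> L -> W) : Prop :=
  forall x1 x2 x3,
    - f (br x1 x2) (al x3) + f (br x1 x3) (al x2) + f (al x1) (br x2 x3) = 0.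

(* uce_alpha(L) = (alpha(L) (x) alpha(L)) / I_L, given through the universal
   property of this quotient of the tensor product: ucls a b = {a,b} is
   bilinear, kills I_L, spans, and every bilinear map killing I_L factors
   linearly through it. *)
Record uce_data (L : lmodType K) (br : L -> L -> L) (al : L -> L) := UceData {
  uce_T : lmodType K;
  ucls : L -> L -> uce_T;
  ucls_bilin : bilin ucls;
  ucls_rel : kills_IL br al ucls;
  ucls_univ : forall (W : lmodType K) (f : L -> L -> W), bilin f -> kills_IL br al f ->
                exists h : uce_T -> W, is_lin h /\ forall a b, h (ucls a b) = f a b;
  ucls_span : forall u, in_span (fun v => exists a b, v = ucls a b) u;
  ubr : uce_T -> uce_T -> uce_T;
  ubr_bilin : bilin ubr;
  ubr_cls : forall a b c e, ubr (ucls a b) (ucls c e) = ucls (br a b) (br c e);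
  ual : uce_T -> uce_T;
  ual_lin : is_lin ual;
  ual_cls : forall a b, ual (ucls a b) = ucls (al a) (al b);
  uU : uce_T -> L;
  uU_lin : is_lin uU;
  uU_cls : forall a b, uU (ucls a b) = br a b }.

Definition uce_map (L1 L2 : lmodType K) (br1 : L1 -> L1 -> L1) (al1 : L1 -> L1)
  (br2 : L2 -> L2 -> L2) (al2 : L2 -> L2)
  (D1 : uce_data br1 al1) (D2 : uce_data br2 al2) (g : L1 -> L2)
  (h : uce_T D1 -> uce_T D2) : Prop :=
  is_lin h /\ forall a b, h (ucls D1 a b) = ucls D2 (g a) (g b).

End HomLeibniz.

Arguments uce_T {K L br al}.
Arguments ucls {K L br al}.
Arguments ubr {K L br al}.
Arguments ual {K L br al}.
Arguments uU {K L br al}.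
Arguments uce_map {K L1 L2 br1 al1 br2 al2}.

(* Main.v *)
Require Import Defs.
From HB Require Import structures.
From mathcomp Require Import all_boot all_order all_algebra.
From Stdlib Require Import ClassicalEpsilon FunctionalExtensionality PropExtensionality.
Set Implicit Arguments. Unset Strict Implicit. Unset Printing Implicit Defensive.
Import GRing.Theory.
Local Open Scope ring_scope.

Inductive aexp := AAtom of nat | AZero | AAdd of aexp & aexp | AOpp of aexp.

Section AbelSec.
Variable V : zmodType.
Fixpoint aeval (env : seq V) (e : aexp) : V :=
  match e with
  | AAtom n => nth 0 env n
  | AZero => 0
  | AAdd a b => aeval env a + aeval env b
  | AOpp a => - aeval env a
  end.
Fixpoint evalnf (env : seq V) (s : seq int) : V :=
  match s with [::] => 0 | c :: s' => (head 0 env) *~ c + evalnf (behead env) s' end.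
Fixpoint addl (s1 s2 : seq int) : seq int :=
  match s1, s2 with
  | [::], _ => s2
  | _, [::] => s1
  | x :: s1', y :: s2' => (x + y) :: addl s1' s2'
  end.
Fixpoint nfa (e : aexp) : seq int :=
  match e with
  | AAtom n => rcons (nseq n 0) 1
  | AZero => [::]
  | AAdd a b => addl (nfa a) (nfa b)
  | AOpp a => map -%R (nfa a)
  end.
Lemma evalnf_add env s1 s2 : evalnf env (addl s1 s2) = evalnf env s1 + evalnf env s2.
Proof.
elim: s1 s2 env => [|x s1 IH] [|y s2] env /=; rewrite ?add0r ?addr0 //.
by rewrite IH mulrzDr addrACA.
Qed.
Lemma evalnf_opp env s : evalnf env (map -%R s) = - evalnf env s.
Proof. by elim: s env => [|x s IH] env /=; rewrite ?oppr0 // IH mulrNz opprD. Qed.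
Lemma evalnf_atom env n : evalnf env (rcons (nseq n 0) 1) = nth 0 env n.
Proof.
elim: n env => [|n IH] [|x env] /=; rewrite ?mulr1z ?addr0 ?mulr0z ?add0r //.
by rewrite IH; case: n {IH}.
Qed.
Lemma aeval_nf env e : aeval env e = evalnf env (nfa e).
Proof.
elim: e => [n||a IHa b IHb|a IH] /=.
- by rewrite evalnf_atom.
- by [].
- by rewrite evalnf_add IHa IHb.
- by rewrite evalnf_opp IH.
Qed.
Lemma evalnf_zero env s : all (fun c => c == 0) s -> evalnf env s = 0.
Proof. by elim: s env => [|x s IH] env //= /andP[/eqP-> /IH->]; rewrite mulr0z addr0. Qed.
Lemma abel_sound env e1 e2 :
  all (fun c => c == 0) (addl (nfa e1) (map -%R (nfa e2))) ->
  aeval env e1 = aeval env e2.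
Proof.
move=> H; apply/eqP; rewrite -subr_eq0 !aeval_nf -evalnf_opp -evalnf_add.
by rewrite evalnf_zero.
Qed.
End AbelSec.

Ltac alen l := lazymatch l with
  | nil => constr:(0%nat)
  | _ :: ?l' => let n := alen l' in constr:(S n) end.
Ltac alookup x l := lazymatch l with
  | ?y :: ?l' =>
    let b := match constr:(tt) with
             | _ => let _ := constr:(erefl x : x = y) in constr:(true)
             | _ => constr:(false) end in
    lazymatch b with true => alen l' | false => alookup x l' end
  end.
Ltac areify env t :=
  lazymatch t with
  | @GRing.add _ ?a ?b =>
      let r1 := areify env a in
      lazymatch r1 with (?env1, ?e1) =>
      let r2 := areify env1 b in
      lazymatch r2 with (?env2, ?e2) => constr:((env2, AAdd e1 e2)) end end
  | @GRing.opp _ ?a =>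
      let r1 := areify env a in
      lazymatch r1 with (?env1, ?e1) => constr:((env1, AOpp e1)) end
  | @GRing.zero _ => constr:((env, AZero))
  | _ => match constr:(tt) with
         | _ => let n := alookup t env in constr:((env, AAtom n))
         | _ => let n := alen env in constr:((t :: env, AAtom n))
         end
  end.
Ltac abel :=
  lazymatch goal with
  | |- @eq ?T ?l ?r =>
    let V := constr:(T : zmodType) in
    let r1 := areify (@nil T) l in
    lazymatch r1 with (?env1, ?e1) =>
    let r2 := areify env1 r in
    lazymatch r2 with (?env2, ?e2) => 
      change (aeval (rev env2) e1 = aeval (rev env2) e2);
      apply: abel_sound; vm_compute; reflexivity
    end end
  end.


Section SpanFacts.
Variable K : fieldType.
Variable V : lmodType K.
Variable P : V -> Prop.
Lemma span_add x y : in_span P x -> in_span P y -> in_span P (x + y).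
Proof.
elim=> [|a u v Pu _ IH] Hy; first by rewrite add0r.
by rewrite -addrA; apply: spanS => //; apply: IH.
Qed.
Lemma span_scale c x : in_span P x -> in_span P (c *: x).
Proof.
elim=> [|a u v Pu _ IH]; first by rewrite scaler0; apply: span0.
by rewrite scalerDr scalerA; apply: spanS.
Qed.
Lemma span_opp x : in_span P x -> in_span P (- x).
Proof. by move=> H; rewrite -scaleN1r; apply: span_scale. Qed.
Lemma span_sub x y : in_span P x -> in_span P y -> in_span P (x - y).
Proof. by move=> H1 H2; apply: span_add => //; apply: span_opp. Qed.
Lemma N_rw x y : x = y -> in_span P y -> in_span P x.
Proof. by move=> ->. Qed.
Lemma span_gen x : P x -> in_span P x.
Proof. by move=> H; rewrite -[x]addr0 -[x]scale1r; apply: spanS => //; apply: span0. Qed.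
End SpanFacts.

Section Quot.
Variable K : fieldType.
Variable V : lmodType K.
Variable P : V -> Prop.
Local Notation N := (in_span P).

Definition canon (x : V) : V := epsilon (inhabits 0) (fun y => N (y - x)).
Lemma canon_rel x : N (canon x - x).
Proof.
apply: (epsilon_spec (inhabits 0) (fun y => N (y - x))).
by exists x; rewrite subrr; apply: span0.
Qed.
Lemma canon_eq x y : N (x - y) -> canon x = canon y.
Proof.
move=> H; rewrite /canon; congr epsilon.
apply: functional_extensionality => z; apply: propositional_extensionality; split => Hz.
- have -> : z - y = (z - x) + (x - y) by rewrite addrA subrK.
  by apply: span_add.
- have -> : z - x = (z - y) - (x - y) by rewrite opprB addrA subrK.
  by apply: span_sub.
Qed.
Lemma canon_eqN x y : canon x = canon y -> N (x - y).
Proof.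
move=> H.
have -> : x - y = - (canon x - x) + (canon y - y).
  by rewrite H opprB addrA subrK.
by apply: span_add; [apply: span_opp|]; apply: canon_rel.
Qed.
Lemma canonK x : canon (canon x) = canon x.
Proof. by apply: canon_eq; apply: canon_rel. Qed.

Definition qT := {x : V | canon x == x}.
HB.instance Definition _ := [isSub for (@sval V (fun x => canon x == x))].
HB.instance Definition _ := [Choice of qT by <:].

Definition qmk (x : V) : qT := exist _ (canon x) (introT eqP (canonK x)).
Lemma qmk_val (w : qT) : qmk (val w) = w.
Proof. by apply: val_inj => /=; case: w => x /= /eqP. Qed.
Lemma qmk_eq x y : N (x - y) -> qmk x = qmk y.
Proof. by move=> H; apply: val_inj => /=; apply: canon_eq. Qed.
Lemma qmk_eqN x y : qmk x = qmk y -> N (x - y).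
Proof. by move=> H; apply: canon_eqN; have := congr1 val H. Qed.
Lemma canon_val (w : qT) : N (val w - val w).
Proof. by rewrite subrr; apply: span0. Qed.

Definition qzero : qT := qmk 0.
Definition qadd (a b : qT) : qT := qmk (val a + val b).
Definition qopp (a : qT) : qT := qmk (- val a).
Definition qscale (c : K) (a : qT) : qT := qmk (c *: val a).

Lemma vmk x : N (val (qmk x) - x).
Proof. by apply: canon_rel. Qed.

Ltac qsolve := apply: qmk_eq.

Lemma qaddA : associative qadd.
Proof.
move=> a b c; rewrite /qadd; qsolve.
apply: (N_rw (y := - ((val (qmk (val a + val b)) - (val a + val b)) - (val (qmk (val b + val c)) - (val b + val c))))).
  by abel.
by apply: span_opp; apply: span_sub; apply: vmk.
Qed.
Lemma qaddC : commutative qadd.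
Proof. by move=> a b; rewrite /qadd addrC. Qed.
Lemma qadd0 : left_id qzero qadd.
Proof.
move=> a; rewrite /qadd -[in RHS](qmk_val a); qsolve.
by apply: (N_rw (y := val (qmk 0) - 0)); [abel|apply: vmk].
Qed.
Lemma qaddN : left_inverse qzero qopp qadd.
Proof.
move=> a; rewrite /qadd /qzero; qsolve.
rewrite subr0.
have -> : val (qopp a) + val a = val (qmk (- val a)) - (- val a) by rewrite opprK.
by apply: vmk.
Qed.
HB.instance Definition _ := GRing.isZmodule.Build qT qaddA qaddC qadd0 qaddN.

Lemma qscaleA c d (a : qT) : qscale c (qscale d a) = qscale (c * d) a.
Proof.
rewrite /qscale; qsolve.
rewrite -scalerA -scalerBr; apply: span_scale; apply: vmk.
Qed.
Lemma qscale1 : left_id 1 qscale.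
Proof. by move=> a; rewrite /qscale scale1r qmk_val. Qed.
Lemma qscaleDr c : {morph qscale c : a b / a + b}.
Proof.
move=> a b; rewrite /qscale /= /qadd; qsolve.
apply: (N_rw (y := c *: (val (qmk (val a + val b)) - (val a + val b))
    - (val (qmk (c *: val a)) - c *: val a) - (val (qmk (c *: val b)) - c *: val b))).
  by rewrite scalerBr scalerDr; abel.
by apply: span_sub; [apply: span_sub; [apply: span_scale|]|]; apply: vmk.
Qed.
Lemma qscaleDl (a : qT) : {morph qscale^~ a : c d / c + d}.
Proof.
move=> c d; rewrite /qscale /= /qadd; qsolve.
rewrite scalerDl.
apply: (N_rw (y := - ((val (qmk (c *: val a)) - c *: val a) + (val (qmk (d *: val a)) - d *: val a)))).
  by abel.
by apply: span_opp; apply: span_add; apply: vmk.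
Qed.
HB.instance Definition _ := GRing.Zmodule_isLmodule.Build K qT qscaleA qscale1 qscaleDr qscaleDl.

Lemma quot_exists : exists (W : lmodType K) (f : V -> W),
  is_lin f /\ forall x, f x = 0 <-> N x.
Proof.
exists qT, qmk; split.
- move=> c x y.
  change (qmk (c *: x + y) = qadd (qscale c (qmk x)) (qmk y)).
  rewrite /qadd /qscale; qsolve.
  apply: (N_rw (y := - ((val (qmk (c *: val (qmk x))) - c *: val (qmk x))
     + c *: (val (qmk x) - x) + (val (qmk y) - y)))).
    by rewrite scalerBr; abel.
  by apply: span_opp; apply: span_add; [apply: span_add; [|apply: span_scale]|]; apply: vmk.
- move=> x; split => [H|H].
  + by rewrite -[x]subr0; apply: qmk_eqN.
  + by apply: qmk_eq; rewrite subr0.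
Qed.
End Quot.

Section Lin.
Variable K : fieldType.
Variables V W X : lmodType K.
Section L1.
Variable f : V -> W.
Hypothesis Hf : is_lin f.
Lemma lin0 : f 0 = 0.
Proof. by have := Hf 1 0 0; rewrite !scale1r addr0 => /eqP; rewrite -subr_eq subrr eq_sym => /eqP. Qed.
Lemma linD x y : f (x + y) = f x + f y.
Proof. by have := Hf 1 x y; rewrite !scale1r. Qed.
Lemma linZ c x : f (c *: x) = c *: f x.
Proof. by have := Hf c x 0; rewrite !addr0 lin0 addr0. Qed.
Lemma linN x : f (- x) = - f x.
Proof. by rewrite -scaleN1r linZ scaleN1r. Qed.
Lemma linB x y : f (x - y) = f x - f y.
Proof. by rewrite linD linN. Qed.
End L1.
End Lin.
Section B1.
Variable K : fieldType.
Variables V W X : lmodType K.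
Variable f : V -> W -> X.
Hypothesis Hf : bilin f.
Lemma bD1 x y z : f (x + y) z = f x z + f y z.
Proof. exact: (linD (Hf.1 z) x y). Qed.
Lemma bD2 x y z : f z (x + y) = f z x + f z y.
Proof. exact: (linD (Hf.2 z) x y). Qed.
Lemma bN1 x z : f (- x) z = - f x z.
Proof. exact: (linN (Hf.1 z) x). Qed.
Lemma bN2 x z : f z (- x) = - f z x.
Proof. exact: (linN (Hf.2 z) x). Qed.
Lemma b01 z : f 0 z = 0.
Proof. exact: (lin0 (Hf.1 z)). Qed.
Lemma b02 z : f z 0 = 0.
Proof. exact: (lin0 (Hf.2 z)). Qed.
Lemma bZ1 c x z : f (c *: x) z = c *: f x z.
Proof. exact: (linZ (Hf.1 z) c x). Qed.
Lemma bZ2 c x z : f z (c *: x) = c *: f z x.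
Proof. exact: (linZ (Hf.2 z) c x). Qed.
Lemma bB1 x y z : f (x - y) z = f x z - f y z.
Proof. by rewrite bD1 bN1. Qed.
Lemma bB2 x y z : f z (x - y) = f z x - f z y.
Proof. by rewrite bD2 bN2. Qed.
End B1.
Section LinS.
Variable K : fieldType.
Variables V W : lmodType K.
Lemma sub0_eq (x y z : V) : z = 0 -> x - y = z -> x = y.
Proof. by move=> -> /eqP; rewrite subr_eq0 => /eqP. Qed.
Lemma lin_span (P : V -> Prop) (f g : V -> W) : is_lin f -> is_lin g ->
  (forall x, P x -> f x = g x) -> forall x, in_span P x -> f x = g x.
Proof.
move=> Hf Hg H x; elim=> [|c u v Pu _ IH]; first by rewrite (lin0 Hf) (lin0 Hg).
by rewrite Hf Hg IH H.
Qed.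
End LinS.

Lemma is_lin_comp (K : fieldType) (U V W : lmodType K) (f : V -> W) (g : U -> V) :
  is_lin f -> is_lin g -> is_lin (fun x => f (g x)).
Proof. by move=> Hf Hg c x y; rewrite Hg Hf. Qed.

Section Uce.
Variable K : fieldType.
Variable L : lmodType K.
Variables (br : L -> L -> L) (al : L -> L).
Hypothesis HL : hom_leibniz br al.
Variable D : uce_data br al.
Local Notation T := (uce_T D).
Local Notation cl := (ucls D).

Lemma hl_bil : bilin br. Proof. by case: HL. Qed.
Lemma hl_lin : is_lin al. Proof. by case: HL. Qed.
Lemma hl_leib x y z : br (al x) (br y z) = br (br x y) (al z) - br (br x z) (al y).
Proof. by case: HL. Qed.
Lemma hl_mult x y : al (br x y) = br (al x) (al y).
Proof. by case: HL. Qed.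

Lemma uUl : is_lin (uU D). Proof. exact: (@uU_lin _ _ _ _ D). Qed.
Lemma uall : is_lin (ual D). Proof. exact: (@ual_lin _ _ _ _ D). Qed.
Lemma uce_ext (W : lmodType K) (f g : T -> W) : is_lin f -> is_lin g ->
  (forall a b, f (cl a b) = g (cl a b)) -> forall X, f X = g X.
Proof.
move=> Hf Hg H X; apply: (lin_span Hf Hg _ (ucls_span X)).
by move=> x [a [b ->]].
Qed.

Lemma ubrE X Y : ubr D X Y = cl (uU D X) (uU D Y).
Proof.
have H1 : forall a b Y, ubr D (cl a b) Y = cl (br a b) (uU D Y).
  move=> a b; apply: uce_ext.
  - by apply: (ubr_bilin D).2.
  - by apply: is_lin_comp; [apply: (ucls_bilin D).2|apply: uUl].
  - by move=> c e; rewrite ubr_cls uU_cls.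
move: X; apply: uce_ext.
- by apply: (ubr_bilin D).1.
- by apply: (is_lin_comp (f := fun x => cl x (uU D Y))); [apply: (ucls_bilin D).1|apply: uUl].
- by move=> a b; rewrite H1 uU_cls.
Qed.
Lemma uU_al X : uU D (ual D X) = al (uU D X).
Proof.
move: X; apply: uce_ext.
- by apply: is_lin_comp; [apply: uUl|apply: uall].
- by apply: is_lin_comp; [apply: hl_lin|apply: uUl].
- by move=> a b; rewrite ual_cls !uU_cls hl_mult.
Qed.
Lemma uU_br X Y : uU D (ubr D X Y) = br (uU D X) (uU D Y).
Proof. by rewrite ubrE uU_cls. Qed.
Lemma cls_rel x1 x2 x3 : cl (al x1) (br x2 x3) = cl (br x1 x2) (al x3) - cl (br x1 x3) (al x2).
Proof.
by apply: (sub0_eq (ucls_rel D x1 x2 x3)); abel.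
Qed.
Lemma uce_hl : hom_leibniz (ubr D) (ual D).
Proof.
split.
- exact: ubr_bilin.
- exact: uall.
- move=> X Y Z; rewrite !ubrE !uU_cls !uU_al; exact: cls_rel.
- by move=> X Y; rewrite !ubrE uU_al ual_cls !uU_al.
Qed.
Lemma uU_hom : hl_hom (ubr D) (ual D) br al (uU D).
Proof. by split; [exact: uUl|exact: uU_br|exact: uU_al]. Qed.



Lemma perfect_surj (HP : alpha_perfect br al) x : exists X, uU D X = x.
Proof.
elim: (HP x) => [|c u v [a [b ->]] _ [X HX]].
- by exists 0; rewrite (lin0 uUl).
- by exists (c *: cl (al a) (al b) + X); rewrite uUl uU_cls HX.
Qed.
Lemma perfect_al (HP : alpha_perfect br al) x : exists y, al y = x.
Proof.
elim: (HP x) => [|c u v [a [b ->]] _ [y Hy]].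
- by exists 0; rewrite (lin0 hl_lin).
- by exists (c *: br a b + y); rewrite hl_lin hl_mult Hy.
Qed.
End Uce.

Section UceMap.
Variable K : fieldType.
Variables L1 L2 : lmodType K.
Variables (br1 : L1 -> L1 -> L1) (al1 : L1 -> L1) (br2 : L2 -> L2 -> L2) (al2 : L2 -> L2).
Hypothesis H1 : hom_leibniz br1 al1.
Hypothesis H2 : hom_leibniz br2 al2.
Variables (D1 : uce_data br1 al1) (D2 : uce_data br2 al2).
Variables (g : L1 -> L2) (h : uce_T D1 -> uce_T D2).
Hypothesis Hg : hl_hom br1 al1 br2 al2 g.
Hypothesis Hh : uce_map D1 D2 g h.
Lemma um_lin : is_lin h. Proof. by case: Hh. Qed.
Lemma um_cls a b : h (ucls D1 a b) = ucls D2 (g a) (g b). Proof. by case: Hh. Qed.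
Lemma hom_lin : is_lin g. Proof. by case: Hg. Qed.
Lemma hom_br x y : g (br1 x y) = br2 (g x) (g y). Proof. by case: Hg. Qed.
Lemma hom_al x : g (al1 x) = al2 (g x). Proof. by case: Hg. Qed.
Lemma um_uU X : uU D2 (h X) = g (uU D1 X).
Proof.
move: X; apply: uce_ext.
- by apply: is_lin_comp; [apply: uUl|apply: um_lin].
- by apply: is_lin_comp; [apply: hom_lin|apply: uUl].
- by move=> a b; rewrite um_cls !uU_cls hom_br.
Qed.
Lemma um_br X Y : h (ubr D1 X Y) = ubr D2 (h X) (h Y).
Proof. by rewrite !ubrE um_cls !um_uU. Qed.
Lemma um_al X : h (ual D1 X) = ual D2 (h X).
Proof.
move: X; apply: uce_ext.
- by apply: is_lin_comp; [apply: um_lin|apply: uall].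
- by apply: is_lin_comp; [apply: uall|apply: um_lin].
- by move=> a b; rewrite ual_cls !um_cls ual_cls !hom_al.
Qed.
End UceMap.

Section HA.
Variable K : fieldType.
Variables L M : lmodType K.
Variables (brL : L -> L -> L) (alL : L -> L) (brM : M -> M -> M) (alM : M -> M).
Variables (la : L -> M -> M) (ra : M -> L -> M).
Hypothesis HA : hom_action brL alL brM alM la ra.
Lemma ha_la : bilin la.
Proof. case: HA => _ H2 H3 _; split=> [m|x] c u v; [exact: (H2 c u v m I I I).1|exact: (H3 c x u v I I I).1]. Qed.
Lemma ha_ra : bilin ra.
Proof. case: HA => _ H2 H3 _; split=> [x|m] c u v; [exact: (H3 c x u v I I I).2|exact: (H2 c u v m I I I).2]. Qed.
Lemma ha_ax x y m m' :
       (ra (alM m) (brL x y) = ra (ra m x) (alL y) - ra (ra m y) (alL x)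
    /\ la (alL x) (ra m y) = ra (la x m) (alL y) - la (brL x y) (alM m)
    /\ la (alL x) (la y m) = la (brL x y) (alM m) - ra (la x m) (alL y)
    /\ la (alL x) (brM m m') = brM (la x m) (alM m') - brM (la x m') (alM m)
    /\ brM (alM m) (ra m' x) = ra (brM m m') (alL x) - brM (ra m x) (alM m')
    /\ brM (alM m) (la x m') = brM (ra m x) (alM m') - ra (brM m m') (alL x)
    /\ alM (la x m) = la (alL x) (alM m)
    /\ alM (ra m x) = ra (alM m) (alL x)).
Proof. by case: HA => _ _ _ H; apply: H. Qed.

Hypothesis HL : hom_leibniz brL alL.
Hypothesis HM : hom_leibniz brM alM.

Lemma sd_leib1 (x y z : M * L) :
  (sd_br brM brL alL la ra (sd_al alM alL x) (sd_br brM brL alL la ra y z)).1 =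
  (sd_br brM brL alL la ra (sd_br brM brL alL la ra x y) (sd_al alM alL z)).1
  - (sd_br brM brL alL la ra (sd_br brM brL alL la ra x z) (sd_al alM alL y)).1.
Proof.
case: x => m1 l1; case: y => m2 l2; case: z => m3 l3; rewrite /sd_br /sd_al /=.
have bM := hl_bil HM; have bla := ha_la; have bra := ha_ra.
rewrite !(bD2 bM) !(bD2 bla) !(bD1 bM) !(bD1 bra) !(hl_mult HL).
have [a1 _] := ha_ax (alL l2) (alL l3) m1 m1.
have [_ [a2 _]] := ha_ax (alL l1) (alL l3) m2 m2.
have [_ [_ [a3 _]]] := ha_ax (alL l1) (alL l2) m3 m3.
have [_ [_ [_ [a4 _]]]] := ha_ax (alL l1) l1 m2 m3.
have [_ [_ [_ [_ [a5 _]]]]] := ha_ax (alL l3) l1 m1 m2.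
have [_ [_ [_ [_ [_ [a6 _]]]]]] := ha_ax (alL l2) l1 m1 m3.
rewrite a1 a2 a3 a4 a5 a6 (hl_leib HM).
abel.
Qed.
End HA.

Lemma is_lin_sub (K : fieldType) (V W : lmodType K) (f g : V -> W) :
  is_lin f -> is_lin g -> is_lin (fun x => f x - g x).
Proof. by move=> Hf Hg c x y; rewrite Hf Hg scalerBr; abel. Qed.
Lemma is_lin_add (K : fieldType) (V W : lmodType K) (f g : V -> W) :
  is_lin f -> is_lin g -> is_lin (fun x => f x + g x).
Proof. by move=> Hf Hg c x y; rewrite Hf Hg scalerDr; abel. Qed.
Lemma is_lin_id (K : fieldType) (V : lmodType K) : is_lin (fun x : V => x).
Proof. by []. Qed.

Section Main.
Variable K : fieldType.
Variables M G Q : lmodType K.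
Variables (brM : M -> M -> M) (alM : M -> M) (brG : G -> G -> G) (alG : G -> G)
  (brQ : Q -> Q -> Q) (t : M -> G) (p : G -> Q) (s : Q -> G).
Hypotheses (HM : hom_leibniz brM alM) (HG : hom_leibniz brG alG)
  (HQ : hom_leibniz brQ (fun q => q))
  (PM : alpha_perfect brM alM) (PG : alpha_perfect brG alG)
  (PQ : alpha_perfect brQ (fun q => q))
  (Ht : hl_hom brM alM brG alG t) (Hp : hl_hom brG alG brQ (fun q => q) p)
  (Hs : hl_hom brQ (fun q => q) brG alG s)
  (t_inj : injective t) (p_surj : forall q, exists g, p g = q)
  (exactness : forall g, p g = 0 <-> exists m, t m = g)
  (ps : forall q, p (s q) = q).
Variables (actQM : Q -> M -> M) (actMQ : M -> Q -> M).
Hypotheses (HactQM : forall q m, t (actQM q m) = brG (s q) (t m))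
  (HactMQ : forall m q, t (actMQ m q) = brG (t m) (s q))
  (symm : forall q m, actQM q m + actMQ m q = 0).
Variables (DM : uce_data brM alM) (DG : uce_data brG alG) (DQ : uce_data brQ (fun q => q)).
Variables (tau : uce_T DM -> uce_T DG) (sigma : uce_T DQ -> uce_T DG)
  (pi : uce_T DG -> uce_T DQ).
Hypotheses (Htau : uce_map DM DG t tau) (Hsigma : uce_map DQ DG s sigma)
  (Hpi : uce_map DG DQ p pi).

Local Notation clM := (ucls DM).
Local Notation clG := (ucls DG).
Local Notation clQ := (ucls DQ).

Let bM := hl_bil HM.
Let bG := hl_bil HG.
Let bQ := hl_bil HQ.
Let lM := hl_lin HM.
Let lG := hl_lin HG.
Let tl := hom_lin Ht.
Let sl := hom_lin Hs.
Let pl := hom_lin Hp.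
Let cMb := ucls_bilin DM.
Let cGb := ucls_bilin DG.
Let cQb := ucls_bilin DQ.

Lemma tbr x y : t (brM x y) = brG (t x) (t y). Proof. exact: (@hom_br _ _ _ _ _ _ _ _ Ht x y). Qed.
Lemma tal x : t (alM x) = alG (t x). Proof. exact: (@hom_al _ _ _ _ _ _ _ _ Ht x). Qed.
Lemma sbr x y : s (brQ x y) = brG (s x) (s y). Proof. exact: (@hom_br _ _ _ _ _ _ _ _ Hs x y). Qed.
Lemma sal x : s x = alG (s x). Proof. exact: (@hom_al _ _ _ _ _ _ _ _ Hs x). Qed.
Lemma pbr x y : p (brG x y) = brQ (p x) (p y). Proof. exact: (@hom_br _ _ _ _ _ _ _ _ Hp x y). Qed.
Lemma pal x : p (alG x) = p x. Proof. exact: (@hom_al _ _ _ _ _ _ _ _ Hp x). Qed.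
Lemma pt x : p (t x) = 0. Proof. by apply/exactness; exists x. Qed.
Lemma multG x y : alG (brG x y) = brG (alG x) (alG y). Proof. exact: (@hl_mult _ _ _ _ HG x y). Qed.
Lemma multM x y : alM (brM x y) = brM (alM x) (alM y). Proof. exact: (@hl_mult _ _ _ _ HM x y). Qed.

Lemma aMQ m q : actMQ m q = - actQM q m.
Proof. by apply/eqP; rewrite -addr_eq0 addrC symm. Qed.
Lemma antiG m q : brG (t m) (s q) = - brG (s q) (t m).
Proof. by rewrite -HactMQ -HactQM aMQ (linN tl). Qed.

Lemma aQb : bilin actQM.
Proof.
split=> [m|q] c x y; apply: t_inj; rewrite tl !HactQM.
- by rewrite sl (bD1 bG) (bZ1 bG).
- by rewrite tl (bD2 bG) (bZ2 bG).
Qed.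

Lemma aal q a : alM (actQM q a) = actQM q (alM a).
Proof. by apply: t_inj; rewrite tal !HactQM multG -sal tal. Qed.
Lemma aqq q r a : actQM q (actQM r a) = actQM (brQ q r) (alM a) + actQM r (actQM q a).
Proof.
apply: t_inj; rewrite (linD tl) !HactQM.
rewrite [in LHS](sal q) (hl_leib HG) -?sal sbr tal -(HactQM q a) antiG; abel.
Qed.
Lemma ader q a b : actQM q (brM a b) = brM (actQM q a) (alM b) - brM (actQM q b) (alM a).
Proof.
apply: t_inj; rewrite (linB tl) !tbr !HactQM !tbr !tal.
by rewrite [in LHS](sal q) (hl_leib HG) -?sal.
Qed.
Lemma anti q a b : brM (alM a) (actQM q b) = - brM (actQM q b) (alM a).
Proof.
apply: t_inj; rewrite (linN tl) !tbr !HactQM !tal.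
rewrite (hl_leib HG) -?sal -tbr !antiG -!HactQM ader (linB tl) !tbr !tal.
rewrite (bN1 bG); abel.
Qed.

Ltac ex := repeat progress rewrite ?(bD1 cMb) ?(bD2 cMb) ?(bN1 cMb) ?(bN2 cMb) ?(bZ1 cMb) ?(bZ2 cMb)
  ?(bD1 aQb) ?(bD2 aQb) ?(bN1 aQb) ?(bN2 aQb) ?(bZ1 aQb) ?(bZ2 aQb)
  ?(bD1 bM) ?(bD2 bM) ?(bN1 bM) ?(bN2 bM) ?(bZ1 bM) ?(bZ2 bM)
  ?(linD lM) ?(linN lM) ?(linZ lM).

Ltac ab := rewrite ?scalerBr ?scalerDr ?scalerN; abel.

Definition fL q a b := clM (actQM q a) (alM b) - clM (actQM q b) (alM a).
Definition fR q a b := clM (actMQ a q) (alM b) - clM (alM a) (actQM q b).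

Lemma fL_bil q : bilin (fL q).
Proof. by rewrite /fL; split=> [y|x] c u v; ex; rewrite scalerBr; abel. Qed.
Lemma fR_bil q : bilin (fR q).
Proof. by rewrite /fR; split=> [y|x] c u v; rewrite ?aMQ; ex; ab. Qed.

Lemma fL_kill q : kills_IL brM alM (fL q).
Proof.
move=> x1 x2 x3; rewrite /fL !ader !multM; ex; rewrite -!aal.
rewrite (cls_rel DM (actQM q x1) (alM x2) (alM x3)).
rewrite (cls_rel DM (actQM q x2) (alM x1) (alM x3)).
rewrite (cls_rel DM (actQM q x3) (alM x1) (alM x2)).
abel.
Qed.
Lemma fR_kill q : kills_IL brM alM (fR q).
Proof.
move=> x1 x2 x3; rewrite /fR !aMQ !ader !multM; ex; rewrite -!aal.
rewrite (cls_rel DM (actQM q x1) (alM x2) (alM x3)).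
rewrite (cls_rel DM (alM x1) (actQM q x2) (alM x3)).
rewrite (cls_rel DM (alM x1) (actQM q x3) (alM x2)).
rewrite !anti; ex; abel.
Qed.

Let uUM : is_lin (uU DM) := @uUl _ _ _ _ DM.
Let uUG : is_lin (uU DG) := @uUl _ _ _ _ DG.
Let uUQ : is_lin (uU DQ) := @uUl _ _ _ _ DQ.
Let ualM : is_lin (ual DM) := @uall _ _ _ _ DM.
Let ualG : is_lin (ual DG) := @uall _ _ _ _ DG.
Let ualQ : is_lin (ual DQ) := @uall _ _ _ _ DQ.
Let taul : is_lin tau := um_lin Htau.
Let sigl : is_lin sigma := um_lin Hsigma.
Let pil : is_lin pi := um_lin Hpi.

Lemma exL q : exists h : uce_T DM -> uce_T DM, is_lin h /\ forall a b, h (clM a b) = fL q a b.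
Proof. exact: (ucls_univ DM (fL_bil q) (fL_kill q)). Qed.
Lemma exR q : exists h : uce_T DM -> uce_T DM, is_lin h /\ forall a b, h (clM a b) = fR q a b.
Proof. exact: (ucls_univ DM (fR_bil q) (fR_kill q)). Qed.
Definition hL q := proj1_sig (constructive_indefinite_description _ (exL q)).
Definition hR q := proj1_sig (constructive_indefinite_description _ (exR q)).
Lemma hL_lin q : is_lin (hL q).
Proof. exact: (proj2_sig (constructive_indefinite_description _ (exL q))).1. Qed.
Lemma hR_lin q : is_lin (hR q).
Proof. exact: (proj2_sig (constructive_indefinite_description _ (exR q))).1. Qed.
Lemma hL_cls q a b : hL q (clM a b) = fL q a b.
Proof. exact: (proj2_sig (constructive_indefinite_description _ (exL q))).2. Qed.
Lemma hR_cls q a b : hR q (clM a b) = fR q a b.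
Proof. exact: (proj2_sig (constructive_indefinite_description _ (exR q))).2. Qed.

Ltac lin1 := first [exact: hL_lin | exact: hR_lin | exact: ualM | exact: uUM | exact: taul
  | exact: ualG | exact: uUG | exact: tl | exact: is_lin_id].
Ltac lin := first [ lin1 | (apply: is_lin_sub; lin) | (apply: is_lin_add; lin)
  | (apply: is_lin_comp; [lin1|lin]) ].

Lemma hL_linq c q q' X : hL (c *: q + q') X = c *: hL q X + hL q' X.
Proof.
move: X; apply: uce_ext; first exact: hL_lin.
- by apply: is_lin_add; [move=> d x y; rewrite (hL_lin q) scalerDr !scalerA mulrC|exact: hL_lin].
- by move=> a b; rewrite !hL_cls /fL; ex; ab.
Qed.
Lemma hR_linq c q q' X : hR (c *: q + q') X = c *: hR q X + hR q' X.
Proof.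
move: X; apply: uce_ext; first exact: hR_lin.
- by apply: is_lin_add; [move=> d x y; rewrite (hR_lin q) scalerDr !scalerA mulrC|exact: hR_lin].
- by move=> a b; rewrite !hR_cls /fR !aMQ; ex; ab.
Qed.
Lemma uU_hL q X : uU DM (hL q X) = actQM q (uU DM X).
Proof.
move: X; apply: uce_ext; first by apply: is_lin_comp; [exact: uUM|exact: hL_lin].
- by apply: is_lin_comp; [exact: aQb.2|exact: uUM].
- by move=> a b; rewrite hL_cls /fL (linB uUM) !uU_cls ader.
Qed.
Lemma uU_hR q X : uU DM (hR q X) = actMQ (uU DM X) q.
Proof.
move: X; apply: uce_ext; first by apply: is_lin_comp; [exact: uUM|exact: hR_lin].
- by move=> c x y; rewrite !aMQ uUM (bD2 aQb) (bZ2 aQb) scalerN opprD.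
- move=> a b; rewrite hR_cls /fR (linB uUM) !uU_cls !aMQ anti ader; ex; abel.
Qed.
Lemma al_hL q X : ual DM (hL q X) = hL q (ual DM X).
Proof.
move: X; apply: uce_ext; [lin|lin|].
by move=> a b; rewrite hL_cls ual_cls hL_cls /fL (linB ualM) !ual_cls !aal.
Qed.
Lemma al_hR q X : ual DM (hR q X) = hR q (ual DM X).
Proof.
move: X; apply: uce_ext; [lin|lin|].
by move=> a b; rewrite hR_cls ual_cls hR_cls /fR (linB ualM) !ual_cls !aMQ (linN lM) !aal.
Qed.
Lemma tau_hL q X : tau (hL q X) = clG (s q) (t (uU DM X)).
Proof.
move: X; apply: uce_ext; [lin| |].
- by apply: is_lin_comp; [exact: cGb.2|apply: is_lin_comp; [exact: tl|exact: uUM]].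
- move=> a b; rewrite hL_cls /fL (linB taul) !(um_cls Htau) !HactQM !tal uU_cls tbr.
  by rewrite [in RHS](sal q) (cls_rel DG (s q) (t a) (t b)) -?sal.
Qed.
Lemma tau_hR q X : tau (hR q X) = clG (t (uU DM X)) (s q).
Proof.
move: X; apply: uce_ext; [lin| |].
- apply: (is_lin_comp (f := fun x => clG x (s q))); first exact: cGb.1.
  by apply: is_lin_comp; [exact: tl|exact: uUM].
- move=> a b; rewrite hR_cls /fR (linB taul) !(um_cls Htau) HactMQ HactQM !tal uU_cls tbr.
  have E := cls_rel DG (t a) (t b) (s q).
  rewrite -[brG (s q) (t b)]opprK -antiG (bN2 cGb) E [in RHS](sal q); abel.
Qed.

Lemma ax1 q r X : hR (brQ q r) (ual DM X) = hR r (hR q X) - hR q (hR r X).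
Proof.
move: X; apply: uce_ext; [lin|lin|].
move=> a b; rewrite ual_cls !hR_cls /fR !(linB (hR_lin _)) !hR_cls /fR !aMQ; ex.
rewrite (aqq q r a) (aqq q r b) -!aal; ex; ab.
Qed.
Lemma ax2 q r X : hL q (hR r X) = hR r (hL q X) - hL (brQ q r) (ual DM X).
Proof.
move: X; apply: uce_ext; [lin|lin|].
move=> a b; rewrite ual_cls ?hR_cls ?hL_cls /fR /fL ?(linB (hR_lin _)) ?(linB (hL_lin _)).
rewrite ?hR_cls ?hL_cls /fR /fL !aMQ; ex.
rewrite (aqq q r a) (aqq q r b) -!aal; ex; ab.
Qed.
Lemma ax3 q r X : hL q (hL r X) = hL (brQ q r) (ual DM X) - hR r (hL q X).
Proof.
move: X; apply: uce_ext; [lin|lin|].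
move=> a b; rewrite ual_cls ?hR_cls ?hL_cls /fR /fL ?(linB (hR_lin _)) ?(linB (hL_lin _)).
rewrite ?hR_cls ?hL_cls /fR /fL !aMQ; ex.
rewrite (aqq q r a) (aqq q r b) -!aal; ex; ab.
Qed.

Definition laU (z : uce_T DQ) (X : uce_T DM) := hL (uU DQ z) X.
Definition raU (X : uce_T DM) (z : uce_T DQ) := hR (uU DQ z) X.

Lemma HA_U : hom_action (ubr DQ) (fun z => z) (ubr DM) (ual DM) laU raU.
Proof.
rewrite /laU /raU; split.
- by [].
- by move=> c x y m _ _ _; rewrite uUQ hL_linq hR_linq.
- by move=> c x m m' _ _ _; rewrite (hL_lin _) (hR_lin _).
move=> x y m m' _ _ _ _; rewrite !uU_br.
split; first exact: ax1.
split; first exact: ax2.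
split; first exact: ax3.
split; first by rewrite !ubrE !uU_hL !(uU_al HM) hL_cls.
split; first by rewrite !ubrE !uU_hR !(uU_al HM) hR_cls /fR !aMQ; ex; abel.
split; first by rewrite !ubrE !uU_hL !uU_hR !(uU_al HM) hR_cls /fR; abel.
split; first exact: al_hL.
exact: al_hR.
Qed.

Lemma lin_zero (V W : lmodType K) : is_lin (fun _ : V => (0 : W)).
Proof. by move=> c x y; rewrite scaler0 addr0. Qed.

Lemma pi_tau y : pi (tau y) = 0.
Proof.
move: y; apply: uce_ext; [exact: (is_lin_comp pil taul)|exact: lin_zero|].
by move=> a b; rewrite (um_cls Htau) (um_cls Hpi) !pt (b01 cQb).
Qed.
Lemma pi_sig z : pi (sigma z) = z.
Proof.
move: z; apply: uce_ext; [exact: (is_lin_comp pil sigl)|exact: is_lin_id|].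
by move=> a b; rewrite (um_cls Hsigma) (um_cls Hpi) !ps.
Qed.
Lemma sig_al z : ual DG (sigma z) = sigma z.
Proof.
move: z; apply: uce_ext; [exact: (is_lin_comp ualG sigl)|exact: sigl|].
by move=> a b; rewrite (um_cls Hsigma) ual_cls -!sal.
Qed.
Lemma uU_tau y : uU DG (tau y) = t (uU DM y).
Proof. exact: (um_uU Ht Htau). Qed.
Lemma uU_sig z : uU DG (sigma z) = s (uU DQ z).
Proof. exact: (um_uU Hs Hsigma). Qed.
Lemma tau_br y y' : tau (ubr DM y y') = ubr DG (tau y) (tau y').
Proof. exact: (um_br Ht Htau). Qed.
Lemma sig_br z z' : sigma (ubr DQ z z') = ubr DG (sigma z) (sigma z').
Proof. exact: (um_br Hs Hsigma). Qed.
Lemma tau_al y : tau (ual DM y) = ual DG (tau y).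
Proof. exact: (um_al Ht Htau). Qed.
Lemma brTS y z : ubr DG (tau y) (sigma z) = tau (raU y z).
Proof. by rewrite ubrE uU_tau uU_sig /raU tau_hR. Qed.
Lemma brST z y : ubr DG (sigma z) (tau y) = tau (laU z y).
Proof. by rewrite ubrE uU_tau uU_sig /laU tau_hL. Qed.

Lemma gdec g : exists m, g = t m + s (p g).
Proof.
have [m Hm] : exists m, t m = g - s (p g).
  by apply/exactness; rewrite (linB pl) ps subrr.
by exists m; rewrite Hm subrK.
Qed.
Lemma cls_dec g1 g2 : exists y z, clG g1 g2 = tau y + sigma z.
Proof.
have [m1 ->] := gdec g1; have [m2 ->] := gdec g2.
have [X1 HX1] := perfect_surj DM PM m1; have [X2 HX2] := perfect_surj DM PM m2.
exists (clM m1 m2 + hR (p g2) X1 + hL (p g1) X2), (clQ (p g1) (p g2)).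
rewrite !(linD taul) tau_hR tau_hL HX1 HX2 (um_cls Htau) (um_cls Hsigma).
rewrite (bD1 cGb) !(bD2 cGb); abel.
Qed.
Lemma decomp x : exists y z, x = tau y + sigma z.
Proof.
elim: (@ucls_span _ _ _ _ DG x) => [|c u v [g1 [g2 ->]] _ [y [z ->]]].
- by exists 0, 0; rewrite (lin0 taul) (lin0 sigl) addr0.
- have [y' [z' ->]] := cls_dec g1 g2.
  exists (c *: y' + y), (c *: z' + z); rewrite taul sigl scalerDr; abel.
Qed.
Lemma direct y z : tau y = sigma z -> tau y = 0.
Proof.
move=> H; have Hz : z = 0 by have := congr1 pi H; rewrite pi_tau pi_sig.
by rewrite H Hz (lin0 sigl).
Qed.

Lemma hL0 X : hL 0 X = 0.
Proof.
move: X; apply: uce_ext; [lin1|exact: lin_zero|].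
by move=> a b; rewrite hL_cls /fL !(b01 aQb) !(b01 cMb) subrr.
Qed.
Lemma hR0 X : hR 0 X = 0.
Proof.
move: X; apply: uce_ext; [lin1|exact: lin_zero|].
by move=> a b; rewrite hR_cls /fR !aMQ !(b01 aQb) oppr0 (b01 cMb) (b02 cMb) subrr.
Qed.

Definition brS := sd_br (ubr DM) (ubr DQ) (fun z => z) laU raU.
Definition alS := sd_al (ual DM) (fun z : uce_T DQ => z).
Definition Phi' (r : uce_T DM * uce_T DQ) := tau r.1 + sigma r.2.

Let bMU := ubr_bilin DM.
Let bGU := ubr_bilin DG.
Let bQU := ubr_bilin DQ.

Lemma laU_bil : bilin laU.
Proof.
split=> [X|z] c u v; rewrite /laU.
- by rewrite uUQ hL_linq.
- by rewrite (hL_lin _).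
Qed.
Lemma raU_bil : bilin raU.
Proof.
split=> [z|X] c u v; rewrite /raU.
- by rewrite (hR_lin _).
- by rewrite uUQ hR_linq.
Qed.

Lemma Phi'_hom : hl_hom brS alS (ubr DG) (ual DG) Phi'.
Proof.
split.
- by move=> c [x z] [x' z']; rewrite /Phi' /= taul sigl scalerDr; abel.
- case=> x1 z1 [x2 z2]; rewrite /Phi' /brS /sd_br /=.
  rewrite !(linD taul) tau_br -brTS -brST sig_br.
  rewrite (bD1 bGU) !(bD2 bGU); abel.
- by case=> x z; rewrite /Phi' /alS /sd_al /= tau_al (linD ualG) sig_al.
Qed.

Lemma hl_hom_comp (L1 L2 L3 : lmodType K) br1 al1 br2 al2 br3 al3
  (f : L1 -> L2) (g : L2 -> L3) :
  hl_hom br1 al1 br2 al2 f -> hl_hom br2 al2 br3 al3 g ->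
  hl_hom br1 al1 br3 al3 (fun x => g (f x)).
Proof.
case=> f1 f2 f3 [g1 g2 g3]; split.
- exact: is_lin_comp.
- by move=> x y; rewrite f2 g2.
- by move=> x; rewrite f3 g3.
Qed.

Lemma Phi_eq r : uU DG (Phi' r) = t (uU DM r.1) + s (uU DQ r.2).
Proof. by rewrite /Phi' (linD uUG) uU_tau uU_sig. Qed.
Lemma Phi_ker r : uU DG (Phi' r) = 0 <-> uU DM r.1 = 0 /\ uU DQ r.2 = 0.
Proof.
rewrite Phi_eq; split.
- move=> H; have Hq : uU DQ r.2 = 0.
    by have := congr1 p H; rewrite (linD pl) pt ps add0r (lin0 pl).
  split=> //; apply: t_inj; rewrite (lin0 tl).
  by move: H; rewrite Hq (lin0 sl) addr0.
- by case=> -> ->; rewrite (lin0 tl) (lin0 sl) addr0.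
Qed.

Definition Nset (v : uce_T DM) := exists z k, uU DM k = 0 /\ (v = laU z k \/ v = raU k z).

Lemma brS1D c x x' y : (brS (c *: x + x') y).1 = c *: (brS x y).1 + (brS x' y).1.
Proof.
case: x => x1 x2; case: x' => x1' x2'; case: y => y1 y2; rewrite /brS /sd_br /=.
rewrite (bD1 bMU) (bZ1 bMU) (bD1 laU_bil) (bZ1 laU_bil) (bD1 raU_bil) (bZ1 raU_bil); ab.
Qed.
Lemma brS2D c x x' y : (brS y (c *: x + x')).1 = c *: (brS y x).1 + (brS y x').1.
Proof.
case: x => x1 x2; case: x' => x1' x2'; case: y => y1 y2; rewrite /brS /sd_br /=.
rewrite (bD2 bMU) (bZ2 bMU) (bD2 laU_bil) (bZ2 laU_bil) (bD2 raU_bil) (bZ2 raU_bil); ab.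
Qed.

Lemma laU0 z X : uU DQ z = 0 -> laU z X = 0.
Proof. by rewrite /laU => ->; rewrite hL0. Qed.
Lemma raU0 z X : uU DQ z = 0 -> raU X z = 0.
Proof. by rewrite /raU => ->; rewrite hR0. Qed.

Lemma ualQ_id z : ual DQ z = z.
Proof.
move: z; apply: uce_ext; [exact: ualQ|exact: is_lin_id|].
by move=> a b; rewrite ual_cls.
Qed.
Lemma uceQ_hl : hom_leibniz (ubr DQ) (fun z => z).
Proof.
have [b1 b2 b3 b4] := uce_hl HQ DQ; split => //.
by move=> x y z; have := b3 x y z; rewrite !ualQ_id.
Qed.

Lemma part5 X : tau X = 0 -> in_span Nset X.
Proof.
move=> HX.
have [W [proj [Hpl Hpk]]] := quot_exists Nset.
pose Phi := fun r => uU DG (Phi' r).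
have PhiH : hl_hom brS alS brG alG Phi := hl_hom_comp Phi'_hom (uU_hom HG DG).
have Phil := hom_lin PhiH.
have lift : forall g, {r | Phi r = g}.
  move=> g; apply: constructive_indefinite_description.
  have [Y HY] := perfect_surj DG PG g; have [y [z Hyz]] := decomp Y.
  by exists (y, z); rewrite /Phi /Phi' /= -Hyz.
have Ker : forall k y, Phi k = 0 -> proj (brS k y).1 = 0 /\ proj (brS y k).1 = 0.
  move=> [k1 k2] [y1 y2] /Phi_ker /= [H1 H2]; rewrite /brS /sd_br /=.
  rewrite !ubrE H1 (b01 cMb) (b02 cMb) (laU0 y1 H2) (raU0 y1 H2) ?add0r ?addr0.
  split; apply/Hpk/span_gen.
  - by exists y2, k1; split=> //; right.
  - by exists y2, k1; split=> //; left.
have feq : forall r1 r1' r2 r2', Phi r1 = Phi r1' -> Phi r2 = Phi r2' ->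
    proj (brS r1 r2).1 = proj (brS r1' r2').1.
  move=> r1 r1' r2 r2' E1 E2.
  have K1 : Phi (r1 - r1') = 0 by rewrite (linB Phil) E1 subrr.
  have K2 : Phi (r2 - r2') = 0 by rewrite (linB Phil) E2 subrr.
  have -> : r1 = 1 *: (r1 - r1') + r1' by rewrite scale1r subrK.
  rewrite brS1D Hpl (Ker _ _ K1).1 scaler0 add0r.
  have -> : r2 = 1 *: (r2 - r2') + r2' by rewrite scale1r subrK.
  by rewrite brS2D Hpl (Ker _ _ K2).2 scaler0 add0r.
pose f := fun g1 g2 => proj (brS (sval (lift g1)) (sval (lift g2))).1.
have fb : bilin f.
  split=> [g''|g''] c g g'; rewrite /f.
  - rewrite (feq _ (c *: sval (lift g) + sval (lift g')) _ (sval (lift g''))) //.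
      by rewrite brS1D Hpl.
    by rewrite Phil !(proj2_sig (lift _)).
  - rewrite (feq _ (sval (lift g'')) _ (c *: sval (lift g) + sval (lift g'))) //.
      by rewrite brS2D Hpl.
    by rewrite Phil !(proj2_sig (lift _)).
have fk : kills_IL brG alG f.
  move=> g1 g2 g3; rewrite /f.
  set x1 := sval (lift g1); set x2 := sval (lift g2); set x3 := sval (lift g3).
  have P1 : Phi x1 = g1 by rewrite /x1 (proj2_sig (lift _)).
  have P2 : Phi x2 = g2 by rewrite /x2 (proj2_sig (lift _)).
  have P3 : Phi x3 = g3 by rewrite /x3 (proj2_sig (lift _)).
  have Lf : forall g, Phi (sval (lift g)) = g by move=> g; rewrite (proj2_sig (lift _)).
  have E1 : Phi (sval (lift (brG g1 g2))) = Phi (brS x1 x2) by rewrite Lf (hom_br PhiH) P1 P2.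
  have E2 : Phi (sval (lift (brG g1 g3))) = Phi (brS x1 x3) by rewrite Lf (hom_br PhiH) P1 P3.
  have E3 : Phi (sval (lift (brG g2 g3))) = Phi (brS x2 x3) by rewrite Lf (hom_br PhiH) P2 P3.
  have A1 : Phi (sval (lift (alG g1))) = Phi (alS x1) by rewrite Lf (hom_al PhiH) P1.
  have A2 : Phi (sval (lift (alG g2))) = Phi (alS x2) by rewrite Lf (hom_al PhiH) P2.
  have A3 : Phi (sval (lift (alG g3))) = Phi (alS x3) by rewrite Lf (hom_al PhiH) P3.
  rewrite (feq _ _ _ _ E1 A3) (feq _ _ _ _ E2 A2) (feq _ _ _ _ A1 E3).
  rewrite /alS /brS (sd_leib1 HA_U uceQ_hl (uce_hl HM DM)) (linB Hpl); abel.
have [h [hl hc]] := ucls_univ DG fb fk.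
have htau : forall Y, h (tau Y) = proj Y.
  apply: uce_ext; [exact: (is_lin_comp hl taul)|exact: Hpl|].
  move=> a b; rewrite (um_cls Htau) hc /f.
  have [Xa HXa] := perfect_surj DM PM a; have [Xb HXb] := perfect_surj DM PM b.
  rewrite (feq _ (Xa, 0) _ (Xb, 0)).
  - rewrite /brS /sd_br /= ubrE HXa HXb laU0 ?raU0 ?(lin0 uUQ) //; by rewrite !addr0.
  - by rewrite (proj2_sig (lift _)) /Phi Phi_eq /= HXa (lin0 uUQ) (lin0 sl) addr0.
  - by rewrite (proj2_sig (lift _)) /Phi Phi_eq /= HXb (lin0 uUQ) (lin0 sl) addr0.
by apply/Hpk; rewrite -htau HX (lin0 hl).
Qed.

Lemma self_action (L : lmodType K) (br : L -> L -> L) (al : L -> L)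
  (HL : hom_leibniz br al) (PL0 PM0 : L -> Prop) :
  (forall x m, PL0 x -> PM0 m -> PM0 (br x m) /\ PM0 (br m x)) ->
  hom_action_on PL0 PM0 br al br al br br.
Proof.
move=> Hc; have bL := hl_bil HL; split => //.
- by move=> c x y m _ _ _; split; [exact: (bL.1 m)|exact: (bL.2 m)].
- by move=> c x m m' _ _ _; split; [exact: (bL.2 x)|exact: (bL.1 x)].
move=> x y m m' _ _ _ _; rewrite !(hl_leib HL) !(hl_mult HL).
by do 6 (split; first by []).
Qed.

Lemma main5p2 :
  let inT := fun x : uce_T DG => exists y, tau y = x in
  let inS := fun x : uce_T DG => exists z, sigma z = x in
  [/\ (forall x, inT x <-> pi x = 0),
      (forall y z, inT (ubr DG (tau y) z) /\ inT (ubr DG z (tau y))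
                   /\ inT (ual DG (tau y))),
      (forall z1 z2, inS (ubr DG (sigma z1) (sigma z2)))
        /\ (forall z, ual DG (sigma z) = sigma z),
      (forall x, exists y z, x = tau y + sigma z)
        /\ (forall y z, tau y = sigma z -> tau y = 0)
    & hom_action_on inS inT (ubr DG) (ual DG) (ubr DG) (ual DG) (ubr DG) (ubr DG)
      /\ (forall m1 l1 m2 l2, inT m1 -> inS l1 -> inT m2 -> inS l2 ->
           let r := sd_br (ubr DG) (ubr DG) (ual DG) (ubr DG) (ubr DG) (m1, l1) (m2, l2) in
           inT r.1 /\ inS r.2 /\ r.1 + r.2 = ubr DG (m1 + l1) (m2 + l2))
      /\ (forall m l, inT m -> inS l ->
           let r := sd_al (ual DG) (ual DG) (m, l) in
           inT r.1 /\ inS r.2 /\ r.1 + r.2 = ual DG (m + l))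
      /\ (forall x, exists m l, [/\ inT m, inS l & x = m + l])
      /\ (forall m l m' l', inT m -> inS l -> inT m' -> inS l' ->
           m + l = m' + l' -> m = m' /\ l = l')]
  /\ (injective sigma
      /\ (forall z1 z2, sigma (ubr DQ z1 z2) = ubr DG (sigma z1) (sigma z2))
      /\ (forall z, sigma z = ual DG (sigma z)))
  /\ ((forall x, uU DG x = 0 <->
         exists y z, [/\ uU DM y = 0, uU DQ z = 0 & x = tau y + sigma z])
      /\ (forall y z, uU DM y = 0 -> uU DQ z = 0 -> tau y = sigma z -> tau y = 0))
  /\ (exists (laU : uce_T DQ -> uce_T DM -> uce_T DM)
             (raU : uce_T DM -> uce_T DQ -> uce_T DM),
      [/\ forall q1 q2 m1 m2,
            laU (ucls DQ q1 q2) (ucls DM (alM m1) (alM m2))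
              = ucls DM (actQM (brQ q1 q2) (alM m1)) (alM (alM m2))
                - ucls DM (actQM (brQ q1 q2) (alM m2)) (alM (alM m1))
            /\ raU (ucls DM (alM m1) (alM m2)) (ucls DQ q1 q2)
              = ucls DM (actMQ (alM m1) (brQ q1 q2)) (alM (alM m2))
                - ucls DM (alM (alM m1)) (actQM (brQ q1 q2) (alM m2)),
          hom_action (ubr DQ) (fun z => z) (ubr DM) (ual DM) laU raU,
          hl_hom (sd_br (ubr DM) (ubr DQ) (fun z => z) laU raU)
              (sd_al (ual DM) (fun z => z)) (ubr DG) (ual DG)
              (fun r : uce_T DM * uce_T DQ => tau r.1 + sigma r.2)
            /\ (forall x, exists r : uce_T DM * uce_T DQ, tau r.1 + sigma r.2 = x),
          [/\ hl_hom (sd_br (ubr DM) (ubr DQ) (fun z => z) laU raU)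
                  (sd_al (ual DM) (fun z => z)) brG alG
                  (fun r : uce_T DM * uce_T DQ => uU DG (tau r.1 + sigma r.2)),
              (forall g, exists r : uce_T DM * uce_T DQ, uU DG (tau r.1 + sigma r.2) = g),
              (forall r : uce_T DM * uce_T DQ,
                 uU DG (tau r.1 + sigma r.2) = t (uU DM r.1) + s (uU DQ r.2))
            & (forall r : uce_T DM * uce_T DQ,
                 uU DG (tau r.1 + sigma r.2) = 0 <-> uU DM r.1 = 0 /\ uU DQ r.2 = 0)]
        & forall r : uce_T DM * uce_T DQ,
            tau r.1 + sigma r.2 = 0 <->
            r.2 = 0 /\
            in_span (fun v => exists z k, uU DM k = 0 /\ (v = laU z k \/ v = raU k z)) r.1]).
Proof.
move=> inT inS.
have inTD : forall a b, inT a -> inT b -> inT (a + b).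
  by move=> a b [y <-] [y' <-]; exists (y + y'); rewrite (linD taul).
have P1b : forall y z, inT (ubr DG (tau y) z) /\ inT (ubr DG z (tau y)) /\ inT (ual DG (tau y)).
  move=> y z; have [y' [z' ->]] := decomp z.
  split; last split.
  - by rewrite (bD2 bGU) -tau_br brTS; apply: inTD; eexists.
  - by rewrite (bD1 bGU) -tau_br brST; apply: inTD; eexists.
  - by exists (ual DM y); rewrite tau_al.
have uniq : forall m l m' l', inT m -> inS l -> inT m' -> inS l' ->
    m + l = m' + l' -> m = m' /\ l = l'.
  move=> m l m' l' [y <-] [z <-] [y' <-] [z' <-] E.
  have Ez : z = z' by have := congr1 pi E; rewrite !(linD pil) !pi_tau !pi_sig !add0r.
  by subst z'; split=> //; apply: (addIr (sigma z)).
split; last split; last split.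
- split.
  + move=> x; split; first by move=> [y <-]; exact: pi_tau.
    move=> H; have [y [z E]] := decomp x.
    have Ez : z = 0 by have := congr1 pi E; rewrite H (linD pil) pi_tau pi_sig add0r.
    by exists y; rewrite E Ez (lin0 sigl) addr0.
  + exact: P1b.
  + split; last exact: sig_al.
    by move=> z1 z2; exists (ubr DQ z1 z2); rewrite sig_br.
  + split; first exact: decomp.
    exact: direct.
  + split.
      apply: self_action; first exact: (uce_hl HG DG).
      move=> x m [z <-] [y <-]; have [_ [H1 _]] := P1b y (sigma z); have [H2 _] := P1b y (sigma z).
      by split.
    split.
      move=> m1 l1 m2 l2 [y1 <-] [z1 <-] [y2 <-] [z2 <-]; rewrite /sd_br /= !sig_al.
      split; last split.
      * by rewrite -tau_br brST brTS -!(linD taul); eexists.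
      * by exists (ubr DQ z1 z2); rewrite sig_br.
      * by rewrite (bD1 bGU) !(bD2 bGU); abel.
    split.
      move=> m l [y <-] [z <-]; rewrite /sd_al /= sig_al.
      split; last split.
      * by exists (ual DM y); rewrite tau_al.
      * by exists z.
      * by rewrite (linD ualG) sig_al.
    split; last exact: uniq.
    move=> x; have [y [z ->]] := decomp x.
    by exists (tau y), (sigma z); split=> //; [exists y|exists z].
- split.
    by move=> z z' H; have := congr1 pi H; rewrite !pi_sig.
  split; first exact: sig_br.
  by move=> z; rewrite sig_al.
- split.
    move=> x; split.
    + move=> H; have [y [z E]] := decomp x.
      have := H; rewrite E -/(Phi' (y, z)) Phi_ker /= => -[Hy Hz].
      by exists y, z.
    + by move=> [y [z [Hy Hz ->]]]; rewrite -/(Phi' (y, z)) Phi_ker.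
  by move=> y z _ _; exact: direct.
- exists laU, raU; split.
  + move=> q1 q2 m1 m2; rewrite /laU /raU !uU_cls hL_cls hR_cls.
    by split.
  + exact: HA_U.
  + split; first exact: Phi'_hom.
    by move=> x; have [y [z ->]] := decomp x; exists (y, z).
  + split.
    * exact: (hl_hom_comp Phi'_hom (uU_hom HG DG)).
    * move=> g; have [X <-] := perfect_surj DG PG g; have [y [z ->]] := decomp X.
      by exists (y, z).
    * exact: Phi_eq.
    * exact: Phi_ker.
  + move=> [x z] /=; split.
    * move=> H; have Ez : z = 0.
        by have := congr1 pi H; rewrite (linD pil) pi_tau pi_sig add0r (lin0 pil).
      split=> //; apply: part5.
      by move: H; rewrite Ez (lin0 sigl) addr0.
    * move=> [-> Hx]; rewrite (lin0 sigl) addr0.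
      have H0 : forall v, Nset v -> tau v = 0.
        move=> v [z' [k [Hk [->| ->]]]].
        - by rewrite /laU tau_hL Hk (lin0 tl) (b02 cGb).
        - by rewrite /raU tau_hR Hk (lin0 tl) (b01 cGb).
      by have := @lin_span _ _ _ _ tau (fun _ => 0) taul (@lin_zero (uce_T DM) (uce_T DG)) H0 x Hx.
Qed.
End Main.

Theorem theorem5p2 (K : fieldType) (M G Q : lmodType K)
  (brM : M -> M -> M) (alM : M -> M)
  (brG : G -> G -> G) (alG : G -> G)
  (brQ : Q -> Q -> Q)
  (t : M -> G) (p : G -> Q) (s : Q -> G)
  (HM : hom_leibniz brM alM) (HG : hom_leibniz brG alG)
  (HQ : hom_leibniz brQ (fun q => q))
  (PM : alpha_perfect brM alM) (PG : alpha_perfect brG alG)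
  (PQ : alpha_perfect brQ (fun q => q))
  (Ht : hl_hom brM alM brG alG t) (Hp : hl_hom brG alG brQ (fun q => q) p)
  (Hs : hl_hom brQ (fun q => q) brG alG s)
  (t_inj : injective t) (p_surj : forall q, exists g, p g = q)
  (exactness : forall g, p g = 0 <-> exists m, t m = g)
  (ps : forall q, p (s q) = q)
  (* the induced Hom-action: q.m = t^{-1}[s q, t m], m.q = t^{-1}[t m, s q] *)
  (actQM : Q -> M -> M) (actMQ : M -> Q -> M)
  (HactQM : forall q m, t (actQM q m) = brG (s q) (t m))
  (HactMQ : forall m q, t (actMQ m q) = brG (t m) (s q))
  (symm : forall q m, actQM q m + actMQ m q = 0)
  (DM : uce_data brM alM) (DG : uce_data brG alG)
  (DQ : uce_data brQ (fun q => q))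
  (tau : uce_T DM -> uce_T DG) (sigma : uce_T DQ -> uce_T DG)
  (pi : uce_T DG -> uce_T DQ)
  (Htau : uce_map DM DG t tau) (Hsigma : uce_map DQ DG s sigma)
  (Hpi : uce_map DG DQ p pi) :
  let inT := fun x : uce_T DG => exists y, tau y = x in
  let inS := fun x : uce_T DG => exists z, sigma z = x in
  (* 1. *)
  [/\ (forall x, inT x <-> pi x = 0),
      (forall y z, inT (ubr DG (tau y) z) /\ inT (ubr DG z (tau y))
                   /\ inT (ual DG (tau y))),
      (forall z1 z2, inS (ubr DG (sigma z1) (sigma z2)))
        /\ (forall z, ual DG (sigma z) = sigma z),
      (forall x, exists y z, x = tau y + sigma z)
        /\ (forall y z, tau y = sigma z -> tau y = 0)
    & hom_action_on inS inT (ubr DG) (ual DG) (ubr DG) (ual DG) (ubr DG) (ubr DG)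
      /\ (forall m1 l1 m2 l2, inT m1 -> inS l1 -> inT m2 -> inS l2 ->
           let r := sd_br (ubr DG) (ubr DG) (ual DG) (ubr DG) (ubr DG) (m1, l1) (m2, l2) in
           inT r.1 /\ inS r.2 /\ r.1 + r.2 = ubr DG (m1 + l1) (m2 + l2))
      /\ (forall m l, inT m -> inS l ->
           let r := sd_al (ual DG) (ual DG) (m, l) in
           inT r.1 /\ inS r.2 /\ r.1 + r.2 = ual DG (m + l))
      /\ (forall x, exists m l, [/\ inT m, inS l & x = m + l])
      /\ (forall m l m' l', inT m -> inS l -> inT m' -> inS l' ->
           m + l = m' + l' -> m = m' /\ l = l')]
  (* 2. *)
  /\ (injective sigma
      /\ (forall z1 z2, sigma (ubr DQ z1 z2) = ubr DG (sigma z1) (sigma z2))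
      /\ (forall z, sigma z = ual DG (sigma z)))
  (* 3. *)
  /\ ((forall x, uU DG x = 0 <->
         exists y z, [/\ uU DM y = 0, uU DQ z = 0 & x = tau y + sigma z])
      /\ (forall y z, uU DM y = 0 -> uU DQ z = 0 -> tau y = sigma z -> tau y = 0))
  (* 4. and 5. *)
  /\ (exists (laU : uce_T DQ -> uce_T DM -> uce_T DM)
             (raU : uce_T DM -> uce_T DQ -> uce_T DM),
      [/\ forall q1 q2 m1 m2,
            laU (ucls DQ q1 q2) (ucls DM (alM m1) (alM m2))
              = ucls DM (actQM (brQ q1 q2) (alM m1)) (alM (alM m2))
                - ucls DM (actQM (brQ q1 q2) (alM m2)) (alM (alM m1))
            /\ raU (ucls DM (alM m1) (alM m2)) (ucls DQ q1 q2)
              = ucls DM (actMQ (alM m1) (brQ q1 q2)) (alM (alM m2))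
                - ucls DM (alM (alM m1)) (actQM (brQ q1 q2) (alM m2)),
          hom_action (ubr DQ) (fun z => z) (ubr DM) (ual DM) laU raU,
          hl_hom (sd_br (ubr DM) (ubr DQ) (fun z => z) laU raU)
              (sd_al (ual DM) (fun z => z)) (ubr DG) (ual DG)
              (fun r : uce_T DM * uce_T DQ => tau r.1 + sigma r.2)
            /\ (forall x, exists r : uce_T DM * uce_T DQ, tau r.1 + sigma r.2 = x),
          [/\ hl_hom (sd_br (ubr DM) (ubr DQ) (fun z => z) laU raU)
                  (sd_al (ual DM) (fun z => z)) brG alG
                  (fun r : uce_T DM * uce_T DQ => uU DG (tau r.1 + sigma r.2)),
              (forall g, exists r : uce_T DM * uce_T DQ, uU DG (tau r.1 + sigma r.2) = g),
              (forall r : uce_T DM * uce_T DQ,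
                 uU DG (tau r.1 + sigma r.2) = t (uU DM r.1) + s (uU DQ r.2))
            & (forall r : uce_T DM * uce_T DQ,
                 uU DG (tau r.1 + sigma r.2) = 0 <-> uU DM r.1 = 0 /\ uU DQ r.2 = 0)]
        & forall r : uce_T DM * uce_T DQ,
            tau r.1 + sigma r.2 = 0 <->
            r.2 = 0 /\
            in_span (fun v => exists z k, uU DM k = 0 /\ (v = laU z k \/ v = raU k z)) r.1]).
Proof. exact: (main5p2 HM HG HQ PM PG Ht Hp Hs t_inj exactness ps HactQM HactMQ symm Htau Hsigma Hpi). Qed.
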